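(* Let $G$ be a graph of order $n\ge 9$. If $\tau(G)\le\frac{n}{2}$ and ${\rm diam}(G)=2$, then $\beta_p(G)\le n-3$.
   Context: All graphs are finite, simple, undirected and connected. Two vertices $u,v$ are twins if $N(u)\setminus\{v\}=N(v)\setminus\{u\}$; the twin number $\tau(G)$ is the maximum cardinality of an equivalence class of the twin relation. For a partition $\Pi=\{S_1,\dots,S_k\}$ of $V(G)$, $r(u|\Pi)=(d(u,S_1),\dots,d(u,S_k))$ with $d(u,S)=\min_{w\in S}d(u,w)$; $\Pi$ is locating if $r(u|\Pi)\ne r(v|\Pi)$ for all distinct $u,v$; $\beta_p(G)$ is the minimum size of a locating partition. *)

(* Defs.v *)
From mathcomp Require Import all_boot.
Set Implicit Arguments. Unset Strict Implicit. Unset Printing Implicit Defensive.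

Section Graph.
Variables (T : finType) (e : rel T).

Definition simple_graph := symmetric e /\ irreflexive e.
Definition connected_graph := forall u v : T, connect e u v.

Fixpoint within (k : nat) (u v : T) : bool :=
  if k is k'.+1 then within k' u v || [exists w, within k' u w && e w v]
  else u == v.

(* graph distance: least k with a walk of length <= k (in a connected
   graph some k < #|T| exists; the default #|T| is never reached) *)
Definition dist (u v : T) : nat :=
  find (fun k => within k u v) (iota 0 #|T|).

Definition diam : nat := \max_(u : T) \max_(v : T) dist u v.

Definition nbh (u : T) : {set T} := [set w | e u w].

Definition twins (u v : T) : bool := nbh u :\ v == nbh v :\ u.

Definition twin_number : nat := \max_(u : T) #|[set v | twins u v]|.

Definition dist_set (u : T) (S : {set T}) : nat :=
  \big[minn/#|T|]_(w in S) dist u w.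

Definition locating_partition (P : {set {set T}}) : bool :=
  partition P [set: T] &&
  [forall u, forall v, (u != v) ==>
     [exists S in P, dist_set u S != dist_set v S]].

(* partition dimension: minimum size of a locating partition
   (the partition into singletons is locating, of size #|T|) *)
Definition partition_dim : nat :=
  \big[minn/#|T|]_(P : {set {set T}} | locating_partition P) #|P|.

End Graph.

(* Main.v *)
Require Import Defs.
From mathcomp Require Import all_boot zify.
Set Implicit Arguments. Unset Strict Implicit. Unset Printing Implicit Defensive.
Definition CL (l : seq bool) (i : nat) := nth false l i.
Definition pidx (i j : nat) : nat :=
  (match i with 0 => 0 | 1 => 4 | 2 => 7 | _ => 9 end) + j - i - 1.
Definition AL (l : seq bool) (i j : nat) : bool :=
  if i < j then nth false l (5 + pidx i j)
  else if j < i then nth false l (5 + pidx j i) else false.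
Definition aL l i j := (i != j) && (if CL l i then AL l i j else ~~ AL l i j).
Definition hasin l x := has (fun j => aL l j x) (iota 0 5).
Definition goodL l (T : seq nat) x :=
  ~~ hasin l x || has (fun y => (y \notin T) && aL l y x) (iota 0 5).
Definition triples : seq (seq nat) :=
  [:: [:: 0;1;2]; [:: 0;1;3]; [:: 0;1;4]; [:: 0;2;3]; [:: 0;2;4]; [:: 0;3;4];
      [:: 1;2;3]; [:: 1;2;4]; [:: 1;3;4]; [:: 2;3;4]].
Definition chk (l : seq bool) : bool :=
  all (fun i => count (aL l i) (iota 0 5) <= 2) (iota 0 5)
  ==> has (fun T => all (goodL l T) T) triples.
Fixpoint allk (n : nat) (acc : seq bool) : bool :=
  if n is n'.+1 then allk n' (true :: acc) && allk n' (false :: acc) else chk acc.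
Lemma allk15 : allk 15 [::] = true.
Proof. vm_compute. reflexivity. Qed.

Lemma allk_spec n acc : allk n acc -> forall s, size s = n -> chk (catrev s acc).
Proof.
elim: n acc => [|n IH] acc /=; first by move=> h [|].
move=> /andP [h1 h2] [|b s] //= [sz]; case: b; [exact: (IH _ h1 s sz) | exact: (IH _ h2 s sz)].
Qed.

Lemma chk_all l : size l = 15 -> chk l.
Proof.
move=> sz; have := allk_spec allk15 (s := rev l); rewrite size_rev => /(_ sz).
by rewrite /= -/(rev (rev l)) revK.
Qed.

Lemma triples_ok : all (fun T => match T with [:: i; j; k] => [&& i < j, j < k & k < 5] | _ => false end) triples.
Proof. by []. Qed.


Lemma bigmin_le_seq (I : eqType) (r : seq I) (Pr : pred I) (F : I -> nat) x a :
  a \in r -> Pr a -> \big[minn/x]_(i <- r | Pr i) F i <= F a.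
Proof.
elim: r => // b r IH; rewrite inE big_cons => /orP [/eqP <- -> | ar Pa].
  exact: geq_minl.
case: (Pr b); last exact: IH.
exact: leq_trans (geq_minr _ _) (IH ar Pa).
Qed.

Section Gen.
Variables (T : finType) (e : rel T).
Hypothesis eS : symmetric e.
Hypothesis eirr : irreflexive e.
Hypothesis n2 : 2 <= #|T|.

Lemma within1 u v : within e 1 u v = (u == v) || e u v.
Proof.
rewrite /=; congr (_ || _); apply/existsP/idP => [[w /andP [/eqP -> //]]|h].
by exists u; rewrite eqxx.
Qed.

Lemma cardT2 : exists n, #|T| = n.+2.
Proof. by exists (#|T| - 2); lia. Qed.

Lemma dist0 u v : (dist e u v == 0) = (u == v).
Proof.
rewrite /dist; have [n ->] := cardT2; rewrite /=.
by case: (u == v).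
Qed.

Lemma dist1 u v : (dist e u v == 1) = (u != v) && e u v.
Proof.
rewrite /dist; have [n ->] := cardT2; rewrite /=.
rewrite -/(within e 1 u v) within1; case: (u =P v) => //= _.
by case: (e u v).
Qed.

Lemma distxx u : dist e u u = 0.
Proof. by apply/eqP; rewrite dist0. Qed.

Lemma dist_set1 u w : dist_set e u [set w] = minn (dist e u w) #|T|.
Proof.
rewrite /dist_set -big_filter.
have -> : [seq x <- index_enum T | x \in [set w]] = [:: w].
  rewrite -(filter_pred1_uniq (index_enum_uniq T) (mem_index_enum w)).
  by apply: eq_filter => x; rewrite inE.
by rewrite big_cons big_nil.
Qed.

Lemma dist_set_mem u (S : {set T}) : u \in S -> dist_set e u S = 0.
Proof.
move=> uS; apply/eqP; rewrite -leqn0 -(distxx u).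
by apply: bigmin_le_seq; rewrite ?mem_index_enum.
Qed.

Lemma dist_set_pos v (S : {set T}) : v \notin S -> 0 < dist_set e v S.
Proof.
move=> vS; rewrite /dist_set; apply: (big_ind (fun x => 0 < x)).
- lia.
- by move=> x y hx hy; rewrite leq_min hx hy.
move=> i iS; rewrite lt0n dist0; apply/eqP => vi.
by rewrite vi iS in vS.
Qed.

Lemma minn1 d : (minn d #|T| == 1) = (d == 1).
Proof. rewrite /minn; case: ltnP => h; apply/eqP/eqP; lia. Qed.

Variable W : {set T}.
Definition sim u v := [forall t in W, e t u == e t v].
Definition cls u := [set v | (v \notin W) && sim v u].
Lemma in_cls u v : (v \in cls u) = (v \notin W) && sim v u.
Proof. by rewrite inE. Qed.
Definition rkset u := [set v | [&& v \notin W, sim v u & enum_rank v < enum_rank u]].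
Definition rk u := #|rkset u|.

Lemma simxx u : sim u u.
Proof. by apply/forall_inP => t _. Qed.

Lemma sim_trans u v w : sim u v -> sim v w -> sim u w.
Proof.
move=> /forall_inP h1 /forall_inP h2; apply/forall_inP => t tW.
by rewrite (eqP (h1 t tW)) h2.
Qed.

Lemma rk_lt u : u \notin W -> rk u < #|cls u|.
Proof.
move=> uW; apply: proper_card; apply/properP; split.
  by apply/subsetP => v; rewrite !inE => /and3P [-> ->].
by exists u; rewrite !inE ?uW ?simxx ?ltnn.
Qed.

Lemma rk_ltlt u v : u \notin W -> sim u v -> enum_rank u < enum_rank v -> rk u < rk v.
Proof.
move=> uW suv hlt; apply: proper_card; apply/properP; split.
  apply/subsetP => w; rewrite !inE => /and3P [-> swu lw] /=.
  by rewrite (sim_trans swu suv) (ltn_trans lw hlt).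
by exists u; rewrite !inE ?uW ?suv ?hlt ?ltnn ?andbF.
Qed.

Lemma sim_sym u v : sim u v -> sim v u.
Proof.
move=> /forall_inP h; apply/forall_inP => t tW; by rewrite eq_sym h.
Qed.

Lemma rk_neq u v : u \notin W -> v \notin W -> sim u v -> u != v -> rk u != rk v.
Proof.
move=> uW vW suv uv.
case: (ltngtP (enum_rank u) (enum_rank v)) => h.
- by rewrite ltn_eqF // rk_ltlt.
- by rewrite gtn_eqF // rk_ltlt // sim_sym.
- by move: uv; rewrite (enum_rank_inj (val_inj h)) eqxx.
Qed.

Hypothesis hX : 3 <= #|~: W|.
Hypothesis hcls : forall u, u \notin W -> #|cls u| <= #|~: W| - 3.
Let c := #|~: W| - 3.
Definition Bk (k : nat) := [set u | (u \notin W) && (rk u == k)].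
Definition PP1 := [set Bk (nat_of_ord i) | i : 'I_c] :\ set0.
Definition PP2 := [set [set w] | w in W].
Definition PP := PP1 :|: PP2.

Lemma rk_c u : u \notin W -> rk u < c.
Proof. by move=> uW; apply: leq_trans (rk_lt uW) (hcls uW). Qed.

Lemma Bk_in u (uW : u \notin W) : Bk (rk u) \in PP.
Proof.
rewrite !inE; apply/orP; left; apply/andP; split.
  by apply/set0Pn; exists u; rewrite !inE uW eqxx.
by apply/imsetP; exists (Ordinal (rk_c uW)).
Qed.

Lemma set1_in w : w \in W -> [set w] \in PP.
Proof. by move=> wW; rewrite !inE; apply/orP; right; apply/imsetP; exists w. Qed.

Lemma card_PP : #|PP| <= #|T| - 3.
Proof.
have h1 : #|PP1| <= c.
  apply: leq_trans (subset_leq_card (subsetDl _ _)) _.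
  by apply: leq_trans (leq_imset_card _ _) _; rewrite card_ord.
have h2 : #|PP2| = #|W| by rewrite card_imset //; apply: set1_inj.
have h3 := cardsC W.
rewrite /PP cardsU; move: h1; rewrite /c; lia.
Qed.

Lemma PP_cases X : X \in PP ->
  (exists k, X = Bk k /\ X != set0) \/ (exists2 w, w \in W & X = [set w]).
Proof.
rewrite !inE => /orP [/andP [nz /imsetP [i _ Xi]] | /imsetP [w wW ->]].
  by left; exists i.
by right; exists w.
Qed.

Lemma PP_partition : partition PP [set: T].
Proof.
apply/and3P; split.
- apply/eqP/setP => u; rewrite inE; apply/bigcupP.
  case: (boolP (u \in W)) => uW.
    by exists [set u]; rewrite ?set1_in ?set11.
  by exists (Bk (rk u)); rewrite ?Bk_in // !inE uW eqxx.
- apply/trivIsetP => A1 A2 hA1 hA2 neq; rewrite -setI_eq0; apply/eqP/setP => x.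
  rewrite !inE; apply/negbTE; apply/negP => /andP [x1 x2].
  case: (PP_cases hA1) => [[k1 [d1 _]]|[w1 w1W d1]];
  case: (PP_cases hA2) => [[k2 [d2 _]]|[w2 w2W d2]]; subst A1 A2.
  + move: x1 x2 neq; rewrite !inE => /andP [_ /eqP <-] /andP [_ /eqP <-].
    by rewrite eqxx.
  + by move: x1 x2; rewrite !inE => /andP [xW _] /eqP xw; rewrite xw w2W in xW.
  + by move: x1 x2; rewrite !inE => /eqP xw /andP [xW _]; rewrite xw w1W in xW.
  + by move: x1 x2 neq; rewrite !inE => /eqP -> /eqP ->; rewrite eqxx.
- apply/negP => /PP_cases [[k [_ /eqP //]]|[w _ /esym/setP/(_ w)]].
  by rewrite !inE eqxx.
Qed.

Lemma PP_locating : locating_partition e PP.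
Proof.
apply/andP; split; first exact: PP_partition.
apply/forallP => u; apply/forallP => v; apply/implyP => uv.
case: (boolP (u \in W)) => uW.
  apply/existsP; exists [set u]; rewrite set1_in //=.
  rewrite dist_set_mem ?set11 // eq_sym -lt0n dist_set_pos // inE eq_sym //.
case: (boolP (v \in W)) => vW.
  apply/existsP; exists [set v]; rewrite set1_in //=.
  rewrite (dist_set_mem (set11 v)) -lt0n dist_set_pos // inE //.
case: (eqVneq (rk u) (rk v)) => ruv.
  have : ~~ sim u v by apply/negP => s; move: (rk_neq uW vW s uv); rewrite ruv eqxx.
  rewrite negb_forall_in => /exists_inP [t tW ht].
  apply/existsP; exists [set t]; rewrite set1_in //=.
  rewrite !dist_set1; apply: contraNneq ht => h.
  have := congr1 (fun d => d == 1) h; rewrite /= !minn1 !dist1.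
  have -> : (u != t) by apply: contraNneq uW => ->.
  have -> : (v != t) by apply: contraNneq vW => ->.
  by rewrite /= (eS u) (eS v) => ->.
apply/existsP; exists (Bk (rk u)); rewrite Bk_in //=.
rewrite dist_set_mem ?inE ?uW ?eqxx // eq_sym -lt0n dist_set_pos //.
by rewrite inE vW eq_sym.
Qed.

Lemma crit_pd : partition_dim e <= #|T| - 3.
Proof.
apply: leq_trans card_PP.
by apply: bigmin_le_seq; rewrite ?mem_index_enum ?PP_locating.
Qed.
End Gen.

Section Main.
Variables (T : finType) (e : rel T).
Hypothesis eS : symmetric e.
Hypothesis eirr : irreflexive e.
Hypothesis n9 : 9 <= #|T|.

Let n2 : 2 <= #|T|. Proof. lia. Qed.

Definition Nb t := [set v | e t v].
Definition Mb t := [set v | (v != t) && ~~ e t v].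

Lemma cardNM t : #|Nb t| + #|Mb t| = #|T| - 1.
Proof.
have := cardsID (Nb t) [set~ t]; rewrite cardsC1.
have -> : [set~ t] :&: Nb t = Nb t.
  by apply/setP => v; rewrite !inE; case: eqP => // ->; rewrite eirr.
have -> : [set~ t] :\: Nb t = Mb t by apply/setP => v; rewrite !inE andbC.
lia.
Qed.

Lemma caseA t : 2 < #|Nb t| -> 2 < #|Mb t| -> partition_dim e <= #|T| - 3.
Proof.
move=> hN hM; have hNM := cardNM t.
have hC : #|~: [set t]| = #|T| - 1 by rewrite cardsC1; lia.
apply: (crit_pd eS n2 (W := [set t])); first by rewrite hC; lia.
move=> u uW; rewrite hC.
case: (boolP (e t u)) => etu.
  apply: leq_trans (subset_leq_card (_ : _ \subset Nb t)) _; last by lia.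
  apply/subsetP => v; rewrite !inE => /andP [_ /forall_inP /(_ t (set11 t)) /eqP ->].
  by [].
apply: leq_trans (subset_leq_card (_ : _ \subset Mb t)) _; last by lia.
apply/subsetP => v; rewrite !inE => /andP [vt /forall_inP /(_ t (set11 t)) /eqP ->].
by rewrite vt etu.
Qed.

Hypothesis reg : forall t, #|Nb t| <= 2 \/ #|Mb t| <= 2.

Definition mm t v := if #|Nb t| <= 2 then e t v else (v != t) && ~~ e t v.
Definition Ev t := [set v | mm t v].

Lemma card_Ev t : #|Ev t| <= 2.
Proof.
case: (leqP #|Nb t| 2) => h.
  by have -> : Ev t = Nb t by apply/setP => v; rewrite !inE /mm h.
case: (reg t) => h'; first by lia.
have -> : Ev t = Mb t by apply/setP => v; rewrite !inE /mm leqNgt h.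
by [].
Qed.

Lemma mm_tt t : mm t t = false.
Proof. by rewrite /mm eirr eqxx; case: ifP. Qed.

Lemma mm_eq t u v : u != t -> v != t -> e t u = e t v -> mm t u = mm t v.
Proof. by move=> ut vt h; rewrite /mm ut vt h. Qed.

Definition Uh := [set v | [exists t, mm t v]].

Hypothesis tw : 2 * twin_number e <= #|T|.

Lemma card_Uh : 5 <= #|Uh|.
Proof.
have hR : #|~: Uh| <= twin_number e.
  case: (set_0Vmem (~: Uh)) => [-> | [u uR]]; first by rewrite cards0.
  apply: leq_trans (leq_bigmax u).
  apply: subset_leq_card; apply/subsetP => x xR; rewrite inE.
  have key : forall y, y != u -> y != x -> e u y = e x y.
    move=> y yu yx.
    move: uR xR; rewrite !inE !negb_exists => /forallP /(_ y) hu /forallP /(_ y) hx.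
    move: hu hx; rewrite /mm; case: ifP => _.
      by rewrite (eS u y) (eS x y) => /negbTE -> /negbTE ->.
    rewrite eq_sym yu eq_sym yx /= !negbK => h1 h2.
    by rewrite (eS u y) (eS x y) h1 h2.
  apply/eqP/setP => y; rewrite !inE.
  case: (eqVneq y x) => [->|yx] /=; first by rewrite eirr andbF.
  case: (eqVneq y u) => [->|yu] /=; first by rewrite eirr.
  by rewrite key.
have := cardsC Uh; lia.
Qed.

End Main.
Section Main2.
Variables (T : finType) (e : rel T).
Hypothesis eS : symmetric e.
Hypothesis eirr : irreflexive e.
Hypothesis n9 : 9 <= #|T|.
Let n2 : 2 <= #|T|. Proof. lia. Qed.
Hypothesis reg : forall t, #|Nb e t| <= 2 \/ #|Mb e t| <= 2.
Hypothesis tw : 2 * twin_number e <= #|T|.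
Notation mm := (mm e).
Notation Ev := (Ev e).
Lemma regime_final u1 u2 u3 t1 t2 t3 :
  uniq [:: u1; u2; u3] ->
  all (fun t => t \notin [:: u1; u2; u3]) [:: t1; t2; t3] ->
  mm t1 u1 -> mm t2 u2 -> mm t3 u3 -> partition_dim e <= #|T| - 3.
Proof.
move=> uu /and3P [nt1 nt2 /andP [nt3 _]] m1 m2 m3.
set W := [set t1; t2; t3]; set U3 := [set u1; u2; u3].
have hW : #|W| <= 3.
  have -> : W = [set x in [:: t1; t2; t3]] by apply/setP => x; rewrite /W !inE -!orbA.
  by rewrite cardsE (leq_trans (card_size _)).
have hU3 : #|U3| = 3.
  have -> : U3 = [set x in [:: u1; u2; u3]] by apply/setP => x; rewrite /U3 !inE -!orbA.
  by rewrite cardsE (card_uniqP uu).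
have hC := cardsC W.
have h6 : 6 <= #|~: W| by lia.
have tW1 : t1 \in W by rewrite /W /U3 !inE eqxx.
have tW2 : t2 \in W by rewrite /W /U3 !inE eqxx orbT.
have tW3 : t3 \in W by rewrite /W /U3 !inE eqxx !orbT.
have U3W : forall x, x \in U3 -> x \notin W.
  move=> x hx; have hx' : x \in [:: u1; u2; u3] by move: hx; rewrite /U3 !inE -!orbA.
  apply/negP; rewrite /W !inE -!orbA => /or3P [] /eqP xt; subst x.
  - by rewrite hx' in nt1.
  - by rewrite hx' in nt2.
  - by rewrite hx' in nt3.
have ut : forall x t, x \notin W -> t \in W -> x != t.
  by move=> x t xW tW; apply: contraNneq xW => ->.
apply: (crit_pd eS n2 (W := W)); first by apply: leq_trans h6.
move=> u uW.
case: (boolP [exists t in W, mm t u]) => [/exists_inP [t tW mtu] | nex].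
  apply: leq_trans (subset_leq_card (_ : _ \subset Ev t)) _.
    apply/subsetP => v; rewrite in_cls => /andP [vW /forall_inP /(_ t tW) /eqP h].
    by rewrite inE (mm_eq (ut _ _ vW tW) (ut _ _ uW tW) h).
  by apply: leq_trans (card_Ev n9 reg t) (leq_trans _ (leq_sub2r 3 h6)).
have key : forall t u', t \in W -> mm t u' -> u' \notin W ->
    forall v, v \in cls e W u -> v != u'.
  move=> t u' tW mt u'W v; rewrite in_cls => /andP [vW /forall_inP /(_ t tW) /eqP h].
  apply: contraNneq nex => vu; apply/exists_inP; exists t => //.
  by rewrite -(mm_eq (ut _ _ vW tW) (ut _ _ uW tW) h) vu.
have hsub : cls e W u \subset ~: W :\: U3.
  apply/subsetP => v vc; rewrite in_setD in_setC.
  have := vc; rewrite in_cls => /andP [-> _]; rewrite andbT /U3 !inE.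
  have uw1 : u1 \notin W by apply: U3W; rewrite !inE eqxx.
  have uw2 : u2 \notin W by apply: U3W; rewrite !inE eqxx orbT.
  have uw3 : u3 \notin W by apply: U3W; rewrite !inE eqxx !orbT.
  by rewrite (negbTE (key _ _ tW1 m1 uw1 _ vc)) (negbTE (key _ _ tW2 m2 uw2 _ vc))
             (negbTE (key _ _ tW3 m3 uw3 _ vc)).
apply: leq_trans (subset_leq_card hsub) _.
rewrite cardsD.
have -> : ~: W :&: U3 = U3.
  apply: setIidPr; apply/subsetP => x hx; move: (U3W x hx); rewrite in_setC; apply.
by rewrite hU3.
Qed.

Lemma regime_main : partition_dim e <= #|T| - 3.
Proof.
have hU := card_Uh eS eirr n9 tw.
have [x0 _] : exists x0, x0 \in Uh e by apply/card_gt0P; lia.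
pose hs := take 5 (enum (Uh e)).
have szh : size hs = 5 by rewrite size_takel // -cardE.
have uh : uniq hs by rewrite take_uniq ?enum_uniq.
have inU : forall x, x \in hs -> x \in Uh e by move=> x /mem_take; rewrite mem_enum.
pose h := nth x0 hs.
have hin : forall i, i < 5 -> h i \in hs by move=> i hi; rewrite mem_nth ?szh.
have hinj : forall i j, i < 5 -> j < 5 -> (h i == h j) = (i == j).
  by move=> i j hi hj; rewrite nth_uniq ?szh.
pose cc i := #|Nb e (h i)| <= 2.
pose ad i j := e (h i) (h j).
pose l := [:: cc 0; cc 1; cc 2; cc 3; cc 4; ad 0 1; ad 0 2; ad 0 3; ad 0 4;
              ad 1 2; ad 1 3; ad 1 4; ad 2 3; ad 2 4; ad 3 4].
have bC : forall i, i < 5 -> CL l i = cc i.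
  by case=> [|[|[|[|[|i]]]]].
have bA : forall i j, i < 5 -> j < 5 -> AL l i j = e (h i) (h j).
  move=> i j; case: i => [|[|[|[|[|i]]]]]; case: j => [|[|[|[|[|j]]]]] //= _ _;
  rewrite /AL /= ?eirr //; apply: eS.
have ba : forall i j, i < 5 -> j < 5 -> aL l i j = mm (h i) (h j).
  move=> i j hi hj; rewrite /aL bC // bA //.
  case: (eqVneq i j) => [<-|ij]; first by rewrite mm_tt.
  by rewrite /mm /cc; case: ifP => //=; rewrite hinj // eq_sym ij.
have map_h : map h (iota 0 5) = hs.
  by have := mkseq_nth x0 hs; rewrite szh.
have outdeg : all (fun i => count (aL l i) (iota 0 5) <= 2) (iota 0 5).
  apply/allP => i; rewrite mem_iota => /andP [_ hi].
  rewrite (@eq_in_count _ _ (fun j => mm (h i) (h j))); last first.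
    by move=> j; rewrite mem_iota => /andP [_ hj]; apply: ba.
  rewrite -(count_map h (mm (h i))) map_h -size_filter.
  rewrite -(card_uniqP (filter_uniq _ uh)).
  apply: leq_trans (card_Ev n9 reg (h i)).
  by apply: subset_leq_card; apply/subsetP => x; rewrite mem_filter inE => /andP [].
have := chk_all (l := l) erefl; rewrite /chk outdeg implyTb => /hasP [Tr Trin /allP gT].
have := (allP triples_ok) Tr Trin.
case: Tr Trin gT => [|i [|j [|k [|]]]] // Trin gT /and3P [ij jk k5].
have j5 : j < 5 by apply: ltn_trans jk k5.
have i5 : i < 5 by apply: ltn_trans ij j5.
have tail : forall x, x \in [:: i; j; k] -> x < 5 ->
    exists2 t, t \notin [:: h i; h j; h k] & mm t (h x).
  move=> x xT x5; have := gT x xT; rewrite /goodL => /orP [nh | /hasP [y yI /andP [yT ayx]]].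
    have := inU _ (hin x x5); rewrite inE => /existsP [t mt].
    exists t => //; apply/negP => tin.
    have ths : t \in hs.
      by move: tin; rewrite !inE => /or3P [] /eqP ->; apply: hin.
    move: nh; rewrite /hasin; apply/negP; rewrite negbK; apply/hasP.
    have hi : index t hs < 5 by rewrite -szh index_mem.
    exists (index t hs); first by rewrite mem_iota.
    by rewrite ba // /h nth_index.
  have y5 : y < 5 by move: yI; rewrite mem_iota.
  exists (h y); last by rewrite -ba.
  move: yT; rewrite !inE !hinj //.
have [t1 nt1 m1] := tail i (mem_head _ _) i5.
have jT : j \in [:: i; j; k] by rewrite !inE eqxx orbT.
have kT : k \in [:: i; j; k] by rewrite !inE eqxx !orbT.
have [t2 nt2 m2] := tail j jT j5.
have [t3 nt3 m3] := tail k kT k5.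
apply: (@regime_final (h i) (h j) (h k) t1 t2 t3) => //=.
  rewrite !inE !hinj // andbT negb_or.
  by rewrite (ltn_eqF ij) (ltn_eqF jk) (ltn_eqF (ltn_trans ij jk)).
by rewrite nt1 nt2 nt3.
Qed.
End Main2.

Theorem proposition13 (T : finType) (e : rel T) :
  simple_graph e -> connected_graph e ->
  9 <= #|T| ->
  2 * twin_number e <= #|T| ->
  diam e = 2 ->
  partition_dim e <= #|T| - 3.
Proof.
move=> [eS eirr] _ n9 tw _.
case: (boolP [exists t, (2 < #|Nb e t|) && (2 < #|Mb e t|)]) => [/existsP [t /andP [h1 h2]] | nex].
  exact: (caseA eS eirr n9 h1 h2).
have reg : forall t, #|Nb e t| <= 2 \/ #|Mb e t| <= 2.
  move=> t; move: nex; rewrite negb_exists => /forallP /(_ t).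
  by rewrite negb_and -!leqNgt => /orP [] ?; [left|right].
exact: (regime_main eS eirr n9 reg tw).
Qed.
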